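(* Let $n_C,n_D\in\mathbb{N}$ and $\mathcal{S}=\{(s_C,s_D)\in\mathbb{N}_0^2: s_C\le n_C,\ s_D\le n_D\}$, enumerated as $\mathbf{s}_1,\dots,\mathbf{s}_{|\mathcal{S}|}$ with index map $\phi(\mathbf{s}_i)=i$. For $\boldsymbol\theta=(\theta_C,\theta_D)\in[0,1]^2$ let $\mathbb{P}_{\boldsymbol\theta}(\mathbf{S}=\mathbf{s})=\binom{n_C}{s_C}\theta_C^{s_C}(1-\theta_C)^{n_C-s_C}\binom{n_D}{s_D}\theta_D^{s_D}(1-\theta_D)^{n_D-s_D}$. Let $g_0$ be an increasing, differentiable function with $g_0(0)\in[0,1]$ and $g_0^{-1}(1)$ defined, and for $K\in\mathbb{N}$ let $0=\theta_1<\theta_2<\dots<\theta_K=g_0^{-1}(1)$. Let $d:\mathcal{S}\to\{0,1\}$ be a decision function, identified with the vector $\mathbf{d}\in\{0,1\}^{|\mathcal{S}|}$, $d_i=d(\mathbf{s}_i)$, satisfying Barnard's convexity condition: $d(\mathbf{s}-(1,0))\ge d(\mathbf{s})$ and $d(\mathbf{s}+(0,1))\ge d(\mathbf{s})$ for all $\mathbf{s}\in\mathcal{S}$ (whenever the shifted vector lies in $\mathcal{S}$). For $\theta\in[0,g_0^{-1}(1)]$ let $r_d(\theta)=\mathbb{P}_{(\theta,g_0(\theta))}(d(\mathbf{S})=1)$, and let $\mathbf{p}_{j,0}\in\mathbb{R}^{|\mathcal{S}|}$ have entries $p_{i,j,0}=\mathbb{P}_{(\theta_j,g_0(\theta_j))}(\mathbf{S}=\mathbf{s}_i)$,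 so that $r_d(\theta_j)=\mathbf{p}_{j,0}^\top\mathbf{d}$. Let $\mathbf{A}_C,\mathbf{A}_D$ be the $|\mathcal{S}|\times|\mathcal{S}|$ matrices whose $i$-th rows are $\mathbf{e}_i-\mathbf{e}_{\phi(\mathbf{s}_i+(1,0))}$ and $\mathbf{e}_i-\mathbf{e}_{\phi(\mathbf{s}_i-(0,1))}$ respectively, where $\mathbf{e}_i$ is the $i$-th standard unit vector and $\mathbf{e}_{\phi(\mathbf{s})}:=\mathbf{0}$ if $\mathbf{s}\notin\mathcal{S}$. For $j\in\{1,\dots,K-1\}$ define vectors $\mathbf{m}_{j,D},\mathbf{m}_{j,C}$ with entries (writing $\mathbf{s}_i=(s_C,s_D)$) $$m_{i,j,D}=n_D(\theta_{j+1}-\theta_j)\binom{n_C}{s_C}\binom{n_D-1}{s_D-1}\max_{\theta\in[\theta_j,\theta_{j+1}]} g_0'(\theta)\,\theta^{s_C}g_0(\theta)^{s_D-1}(1-\theta)^{n_C-s_C}(1-g_0(\theta))^{n_D-s_D},$$ $$m_{i,j,C}=n_C(\theta_{j+1}-\theta_j)\binom{n_C-1}{s_C}\binom{n_D}{s_D}\min_{\theta\in[\theta_j,\theta_{j+1}]} \theta^{s_C}g_0(\theta)^{s_D}(1-\theta)^{n_C-s_C-1}(1-g_0(\theta))^{n_D-s_D}.$$ Then for every $j\in\{1,\dots,K-1\}$ and every $\theta\in(\theta_j,\theta_{j+1})$, $$r_d(\theta)\le \mathbf{p}_{j,0}^\top\mathbf{d}+\max\bigl(0,\ (\mathbf{m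}_{j,D}^\top\mathbf{A}_D-\mathbf{m}_{j,C}^\top\mathbf{A}_C)\mathbf{d}\bigr).$$
   Context: Conventions: $\binom{a}{b}=0$ if $b<0$ or $b>a$, and any entry whose binomial coefficient factor is $0$ is taken to be $0$ (regardless of negative exponents in the accompanying function). The setting is the one-sided two-sample binomial test of $H_0:\theta_D\le g_0(\theta_C)$, with $r_d$ the rejection rate of $d$ along the boundary $\{(\theta,g_0(\theta))\}$ of the null parameter set. *)

(* Defs.v *)
From HB Require Import structures.
From mathcomp Require Import all_boot all_order all_algebra.
From mathcomp Require Import all_classical all_reals all_analysis.
Set Implicit Arguments. Unset Strict Implicit. Unset Printing Implicit Defensive.
Import Order.TTheory GRing.Theory Num.Theory.
Local Open Scope ring_scope.

(* Sample space S = {(s_C,s_D) : s_C <= n_C, s_D <= n_D}, used directly as the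
   finite index type of all |S|-vectors and |S|x|S|-matrices (the enumeration
   phi is then immaterial). *)
Notation Sidx nC nD := ('I_nC.+1 * 'I_nD.+1)%type.

Section Defs.
Variable R : realType.

Definition bR (b : bool) : R := (nat_of_bool b)%:R.

Definition binom_pmf (n : nat) (th : R) (k : nat) : R :=
  'C(n, k)%:R * th ^+ k * (1 - th) ^+ (n - k)%N.

Definition prob (nC nD : nat) (thC thD : R) (s : Sidx nC nD) : R :=
  binom_pmf nC thC s.1 * binom_pmf nD thD s.2.

Definition rej_rate (nC nD : nat) (g0 : R -> R) (d : Sidx nC nD -> bool) (th : R) : R :=
  \sum_(s : Sidx nC nD) bR (d s) * prob (th) (g0 th) s.

Definition p0 (nC nD : nat) (g0 : R -> R) (theta : nat -> R) (j : nat)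
  (s : Sidx nC nD) : R := prob (theta j) (g0 (theta j)) s.

(* A_C : row s is e_s - e_{phi(s+(1,0))}  (second term 0 if s+(1,0) notin S) *)
Definition A_C (nC nD : nat) (s t : Sidx nC nD) : R :=
  bR (s == t) - bR ((nat_of_ord t.1 == (nat_of_ord s.1).+1) && (nat_of_ord t.2 == nat_of_ord s.2)).

(* A_D : row s is e_s - e_{phi(s-(0,1))}  (second term 0 if s-(0,1) notin S) *)
Definition A_D (nC nD : nat) (s t : Sidx nC nD) : R :=
  bR (s == t) - bR ((nat_of_ord t.1 == nat_of_ord s.1) && ((nat_of_ord t.2).+1 == nat_of_ord s.2)).

Definition vecmat (nC nD : nat) (m : Sidx nC nD -> R) (A : Sidx nC nD -> Sidx nC nD -> R)
  (t : Sidx nC nD) : R := \sum_(s : Sidx nC nD) m s * A s t.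

Definition dotd (nC nD : nat) (v : Sidx nC nD -> R) (d : Sidx nC nD -> bool) : R :=
  \sum_(t : Sidx nC nD) v t * bR (d t).

(* the function maximised in m_{i,j,D} (only used when s_D >= 1) *)
Definition fD (nC nD : nat) (g0 g0' : R -> R) (s : Sidx nC nD) (t : R) : R :=
  g0' t * t ^+ s.1 * g0 t ^+ (s.2 - 1)%N * (1 - t) ^+ (nC - s.1)%N
    * (1 - g0 t) ^+ (nD - s.2)%N.

(* the function minimised in m_{i,j,C} (only used when s_C <= n_C - 1) *)
Definition fC (nC nD : nat) (g0 : R -> R) (s : Sidx nC nD) (t : R) : R :=
  t ^+ s.1 * g0 t ^+ s.2 * (1 - t) ^+ (nC - s.1 - 1)%N * (1 - g0 t) ^+ (nD - s.2)%N.

Definition is_max_on (f : R -> R) (a b M : R) : Prop :=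
  (exists2 x, a <= x <= b & f x = M) /\ (forall x, a <= x <= b -> f x <= M).
Definition is_min_on (f : R -> R) (a b M : R) : Prop :=
  (exists2 x, a <= x <= b & f x = M) /\ (forall x, a <= x <= b -> M <= f x).

(* m_{j,D}; MD s j stands for max_{[theta_j,theta_{j+1}]} fD s.
   Entry is 0 when s_D = 0 (binomial C(n_D-1,-1) = 0). *)
Definition mD (nC nD : nat) (theta : nat -> R) (MD : Sidx nC nD -> nat -> R)
  (j : nat) (s : Sidx nC nD) : R :=
  if (nat_of_ord s.2 == 0)%N then 0 else
  nD%:R * (theta j.+1 - theta j) * 'C(nC, s.1)%:R * 'C(nD.-1, (s.2).-1)%:R * MD s j.

(* m_{j,C}; MC s j stands for min_{[theta_j,theta_{j+1}]} fC s.
   Entry is 0 when s_C = n_C (binomial C(n_C-1,n_C) = 0). *)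
Definition mC (nC nD : nat) (theta : nat -> R) (MC : Sidx nC nD -> nat -> R)
  (j : nat) (s : Sidx nC nD) : R :=
  if (nC <= nat_of_ord s.1)%N then 0 else
  nC%:R * (theta j.+1 - theta j) * 'C(nC.-1, s.1)%:R * 'C(nD, s.2)%:R * MC s j.

End Defs.

(* Main.v *)
Require Import Defs.
From HB Require Import structures.
From mathcomp Require Import all_boot all_order all_algebra.
From mathcomp Require Import all_classical all_reals all_analysis.
From mathcomp Require Import ring lra zify.
Import Order.TTheory GRing.Theory Num.Theory.
Local Open Scope ring_scope.
Set Implicit Arguments. Unset Strict Implicit. Unset Printing Implicit Defensive.

Section S.
Variable R : realType.

Definition Bm1 (n : nat) (x : R) (k : nat) : R :=
  if k is k'.+1 then binom_pmf n.-1 x k' else 0.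
Definition db (n : nat) (x : R) (k : nat) : R :=
  n%:R * (Bm1 n x k - binom_pmf n.-1 x k).

Lemma der_bpmf n k (x : R) :
  is_derive x 1 (fun y : R => binom_pmf n y k) (db n x k).
Proof.
have h := is_deriveM (is_deriveM (is_derive_cst ('C(n,k)%:R : R) x 1)
             (is_deriveX k (is_derive_id x (1:R))))
          (is_deriveX (n - k) (is_deriveB (is_derive_cst (1:R) x 1) (is_derive_id x (1:R)))).
have -> : (fun y : R => binom_pmf n y k) =
   ((cst ('C(n,k)%:R : R)) * (@id R) ^+ k) * ((cst (1:R) - @id R) ^+ (n - k)).
  by apply/funext => y; rewrite !fctE.
apply: is_derive_eq h _.
rewrite !fctE /db /Bm1 /binom_pmf /=; have sE : forall a b : R, a *: b = a * b by [].
rewrite !sE.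
case: k => [|k].
  rewrite !subn0 !bin0 !expr0.
  case: n => [|n] /=; first by ring.
  ring.
have e1 : (n.-1 - k = n - k.+1)%N by lia.
have e2 : ((n - k.+1).-1 = n.-1 - k.+1)%N by lia.
rewrite e1 e2 /=.
have b1 : (n * 'C(n.-1, k) = k.+1 * 'C(n, k.+1))%N by rewrite mul_bin_diag.
have b2 : (n * 'C(n.-1, k.+1) = (n - k.+1) * 'C(n, k.+1))%N by rewrite mul_bin_down.
have b1' : (n%:R * 'C(n.-1, k)%:R = k.+1%:R * 'C(n, k.+1)%:R :> R) by rewrite -!natrM b1.
have b2' : (n%:R * 'C(n.-1, k.+1)%:R = (n - k.+1)%:R * 'C(n, k.+1)%:R :> R) by rewrite -!natrM b2.
rewrite [in RHS]mulrBr ![in RHS]mulrA b1' b2'. ring.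
Qed.

Lemma sbp n (D : nat -> R) (x : R) :
  \sum_(k < n.+1) D k * db n x k
  = n%:R * \sum_(k < n) binom_pmf n.-1 x k * (D k.+1 - D k).
Proof.
case: n => [|m]; first by rewrite big_ord0 mulr0 big1 // => i _; rewrite /db mul0r mulr0.
rewrite /db.
under eq_bigr => k _ do rewrite mulrCA mulrBr.
rewrite -mulr_sumr; congr (_ * _); rewrite sumrB.
rewrite big_ord_recl [X in _ - X]big_ord_recr /= mulr0 add0r.
have -> : binom_pmf m x m.+1 = 0 by rewrite /binom_pmf bin_small // !mul0r.
rewrite mulr0 addr0 -sumrB; apply: eq_bigr => i _.
rewrite /bump /=. ring.
Qed.

Lemma sum_pick (T : finType) (F : T -> R) (P : pred T) t0 :
  (forall t, P t = (t == t0)) -> \sum_t @bR R (P t) * F t = F t0.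
Proof.
move=> hP; rewrite (bigD1 t0) //= hP eqxx /bR /= mul1r big1 ?addr0 // => t /negbTE ne.
by rewrite hP ne mul0r.
Qed.

Lemma sum_none (T : finType) (F : T -> R) (P : pred T) :
  (forall t, P t = false) -> \sum_t @bR R (P t) * F t = 0.
Proof. by move=> hP; rewrite big1 // => t _; rewrite hP /bR mul0r. Qed.

End S.

Section Main.
Variables (R : realType) (nC nD : nat) (g0 g0' : R -> R) (d : Sidx nC nD -> bool).

Definition Dn (i k : nat) : R :=
  if (i <= nC)%N && (k <= nD)%N then @bR R (d (inord i, inord k)) else 0.

Definition rr (t : R) : R :=
  \sum_(i < nC.+1) \sum_(l < nD.+1) Dn i l * (binom_pmf nC t i * binom_pmf nD (g0 t) l).

Lemma sum_pair (G : Sidx nC nD -> R) :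
  \sum_s G s = \sum_(i < nC.+1) \sum_(l < nD.+1) G (i, l).
Proof. by rewrite pair_bigA; apply: eq_bigr => -[i l] _. Qed.

Lemma Dn_ord (i : 'I_nC.+1) (l : 'I_nD.+1) : Dn i l = @bR R (d (i, l)).
Proof.
have hi : (i <= nC)%N by rewrite -ltnS.
have hl : (l <= nD)%N by rewrite -ltnS.
by rewrite /Dn hi hl /= !inord_val.
Qed.

Lemma rej_rr t : rej_rate g0 d t = rr t.
Proof.
rewrite /rej_rate sum_pair; apply: eq_bigr => i _; apply: eq_bigr => l _.
by rewrite Dn_ord /prob.
Qed.

Definition rd (x : R) : R :=
  \sum_(i < nC.+1) \sum_(l < nD.+1)
    (Dn i l * db nC x i * binom_pmf nD (g0 x) l
     + Dn i l * db nD (g0 x) l * (binom_pmf nC x i * g0' x)).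

Lemma der_rr (x : R) : is_derive x 1 g0 (g0' x) -> is_derive x 1 rr (rd x).
Proof.
move=> hg.
have -> : rr = \sum_(i < nC.+1) \sum_(l < nD.+1)
    (fun t => Dn i l * (binom_pmf nC t i * binom_pmf nD (g0 t) l)).
  apply/funext => t; rewrite /rr fct_sumE /=; apply: eq_bigr => i _.
  by rewrite fct_sumE.
apply: is_derive_sum => i; apply: is_derive_sum => l.
have h := is_deriveZ (Dn i l) (is_deriveM (der_bpmf nC i x)
            (is_derive1_comp (der_bpmf nD l (g0 x)) hg)).
have -> : (fun t => Dn i l * (binom_pmf nC t i * binom_pmf nD (g0 t) l)) =
   Dn i l \*: ((fun y => binom_pmf nC y i) * ((fun y => binom_pmf nD y l) \o g0)).
  by apply/funext.
apply: is_derive_eq h _.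
have sE : forall a b : R, a *: b = a * b by [].
rewrite !sE /=. ring.
Qed.


Lemma ADd (s : Sidx nC nD) :
  \sum_t @A_D R nC nD s t * @bR R (d t)
  = Dn s.1 s.2 - (if nat_of_ord s.2 is k.+1 then Dn s.1 k else 0).
Proof.
rewrite /A_D; under eq_bigr => t _ do rewrite mulrBl.
rewrite sumrB.
have -> : \sum_t @bR R (s == t) * @bR R (d t) = @bR R (d s).
  by apply: (sum_pick (fun t => @bR R (d t)) (P := fun t => s == t)) => t; rewrite eq_sym.
have -> : @bR R (d s) = Dn s.1 s.2 by case: s => i l; rewrite Dn_ord.
congr (_ - _).
case: s => i [[|k] hk] /=.
  by apply: sum_none => t /=; rewrite andbF.
have hk' : (k < nD.+1)%N by apply: ltnW.
transitivity (@bR R (d (i, inord k))).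
  apply: sum_pick => -[a b] /=.
  by rewrite xpair_eqE eqSS -[b == inord k]val_eqE /= inordK.
have hi : (i <= nC)%N by rewrite -ltnS.
have hk2 : (k <= nD)%N by rewrite -ltnS.
by rewrite /Dn hi hk2 /= inord_val.
Qed.

Lemma ACd (s : Sidx nC nD) :
  \sum_t @A_C R nC nD s t * @bR R (d t) = Dn s.1 s.2 - Dn s.1.+1 s.2.
Proof.
rewrite /A_C; under eq_bigr => t _ do rewrite mulrBl.
rewrite sumrB.
have -> : \sum_t @bR R (s == t) * @bR R (d t) = @bR R (d s).
  by apply: (sum_pick (fun t => @bR R (d t)) (P := fun t => s == t)) => t; rewrite eq_sym.
have -> : @bR R (d s) = Dn s.1 s.2 by case: s => i l; rewrite Dn_ord.
congr (_ - _).
case: s => i l /=.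
have hl : (l <= nD)%N by rewrite -ltnS.
case: (ltnP i nC) => hi.
  have hi' : (i.+1 < nC.+1)%N by [].
  transitivity (@bR R (d (inord i.+1, l))).
    apply: sum_pick => -[a b] /=.
    by rewrite xpair_eqE -[a == inord i.+1]val_eqE /= inordK.
  by rewrite /Dn hi hl /= inord_val.
have hi2 : (i.+1 <= nC)%N = false by apply/negbTE; rewrite -ltnNge ltnS.
rewrite /Dn hi2 /=.
apply: sum_none => -[a b] /=.
case: eqP => [e|] //=.
have := ltn_ord a; lia.
Qed.

Lemma dot_vm (m : Sidx nC nD -> R) (A : Sidx nC nD -> Sidx nC nD -> R) :
  \sum_t (\sum_s m s * A s t) * @bR R (d t) = \sum_s m s * \sum_t A s t * @bR R (d t).
Proof.
under eq_bigr => t _ do rewrite mulr_suml.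
rewrite exchange_big; apply: eq_bigr => s _; rewrite mulr_sumr.
by apply: eq_bigr => t _; rewrite mulrA.
Qed.

Definition c1 (MD : Sidx nC nD -> nat -> R) (j : nat) : R :=
  \sum_(i < nC.+1) \sum_(k < nD) nD%:R * 'C(nC, i)%:R * 'C(nD.-1, k)%:R
     * MD (i, lift ord0 k) j * (Dn i k.+1 - Dn i k).
Definition c2 (MC : Sidx nC nD -> nat -> R) (j : nat) : R :=
  \sum_(i < nC) \sum_(l < nD.+1) nC%:R * 'C(nC.-1, i)%:R * 'C(nD, l)%:R
     * MC (widen_ord (leqnSn nC) i, l) j * (Dn i l - Dn i.+1 l).

Lemma ident (theta : nat -> R) MD MC j :
  dotd (fun t => vecmat (mD theta MD j) (@A_D R nC nD) t
                 - vecmat (mC theta MC j) (@A_C R nC nD) t) d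
  = (theta j.+1 - theta j) * (c1 MD j - c2 MC j).
Proof.
rewrite /dotd /vecmat; under eq_bigr => t _ do rewrite mulrBl.
rewrite sumrB !dot_vm mulrBr; congr (_ - _).
  under eq_bigr => s _ do rewrite ADd.
  rewrite sum_pair /c1 mulr_sumr; apply: eq_bigr => i _.
  rewrite big_ord_recl /= {1}/mD /= mul0r add0r mulr_sumr.
  apply: eq_bigr => k _; rewrite /mD /= /bump leq0n add0n add1n. ring.
under eq_bigr => s _ do rewrite ACd.
rewrite sum_pair /c2 big_ord_recr /=.
rewrite [X in _ + X]big1 ?addr0; last by move=> l _; rewrite /mC /= leqnn mul0r.
rewrite mulr_sumr; apply: eq_bigr => i _; rewrite mulr_sumr; apply: eq_bigr => l _.
rewrite /mC /= leqNgt ltn_ord /=. ring.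
Qed.


Lemma bR_mono (b1 b2 : bool) : (b1 -> b2) -> 0 <= @bR R b2 - @bR R b1.
Proof.
case: b1; case: b2 => h; rewrite /bR /=.
- by rewrite subrr.
- by have := h isT.
- by rewrite subr0 ler01.
- by rewrite subrr.
Qed.

Hypothesis HB1 : forall s t : Sidx nC nD, ((nat_of_ord t.1).+1 = nat_of_ord s.1) ->
  (nat_of_ord t.2 = nat_of_ord s.2) -> d s -> d t.
Hypothesis HB2 : forall s t : Sidx nC nD, (nat_of_ord t.1 = nat_of_ord s.1) ->
  (nat_of_ord t.2 = (nat_of_ord s.2).+1) -> d s -> d t.

Lemma DnD (i : 'I_nC.+1) (k : 'I_nD) : 0 <= Dn i k.+1 - Dn i k.
Proof.
have hi : (i <= nC)%N by rewrite -ltnS.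
have hk : (k <= nD)%N by apply: ltnW.
have hk1 : (k.+1 <= nD)%N := ltn_ord k.
rewrite /Dn hi hk hk1 /=; apply: bR_mono; apply: HB2 => /=; rewrite ?inordK //.
Qed.

Lemma DnC (i : 'I_nC) (l : 'I_nD.+1) : 0 <= Dn i l - Dn i.+1 l.
Proof.
have hi : (i <= nC)%N by apply: ltnW.
have hi1 : (i.+1 <= nC)%N := ltn_ord i.
have hl : (l <= nD)%N by rewrite -ltnS.
rewrite /Dn hi hl hi1 /=; apply: bR_mono; apply: HB1 => /=; rewrite ?inordK //.
Qed.

Lemma rd_le (MD MC : Sidx nC nD -> nat -> R) (j : nat) (x : R)
  (hD : forall s : Sidx nC nD, (0 < s.2)%N -> fD g0 g0' s x <= MD s j)
  (hC : forall s : Sidx nC nD, (s.1 < nC)%N -> MC s j <= fC g0 s x) :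
  rd x <= c1 MD j - c2 MC j.
Proof.
rewrite /rd; under eq_bigr => i _ do rewrite big_split.
rewrite big_split /= addrC; apply: lerD.
  rewrite /c1; apply: ler_sum => i _.
  have -> : \sum_(l < nD.+1) Dn i l * db nD (g0 x) l * (binom_pmf nC x i * g0' x)
           = (binom_pmf nC x i * g0' x) * \sum_(l < nD.+1) Dn i l * db nD (g0 x) l.
    by rewrite mulr_sumr; apply: eq_bigr => l _; rewrite mulrC.
  rewrite sbp mulrA mulr_sumr; apply: ler_sum => k _.
  have hk := DnD i k.
  have hf : fD g0 g0' (i, lift ord0 k) x <= MD (i, lift ord0 k) j.
    by apply: hD; rewrite /= /bump leq0n.
  have e1 : (nD - k.+1 = nD.-1 - k)%N by lia.
  rewrite [X in X <= _](_ : _ = (nD%:R * 'C(nC, i)%:R * 'C(nD.-1, k)%:R)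
        * fD g0 g0' (i, lift ord0 k) x * (Dn i k.+1 - Dn i k)); last first.
    rewrite /fD /binom_pmf /= /bump leq0n ?add0n add1n ?subn1 /= e1. ring.
  apply: ler_wpM2r => //; apply: ler_wpM2l => //.

rewrite exchange_big /= /c2 [X in _ <= - X]exchange_big /= -sumrN.
apply: ler_sum => l _.
have -> : \sum_(i < nC.+1) Dn i l * db nC x i * binom_pmf nD (g0 x) l
         = binom_pmf nD (g0 x) l * \sum_(i < nC.+1) Dn i l * db nC x i.
  by rewrite mulr_sumr; apply: eq_bigr => i _; rewrite mulrC.
rewrite (sbp _ (fun i => Dn i l)) mulrA mulr_sumr -sumrN; apply: ler_sum => i _.
have hi := DnC i l.
have hf : MC (widen_ord (leqnSn nC) i, l) j <= fC g0 (widen_ord (leqnSn nC) i, l) x.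
  by apply: hC; rewrite /= ltn_ord.
have e2 : (nC - i - 1 = nC.-1 - i)%N by lia.
rewrite [X in X <= _](_ : _ = - ((nC%:R * 'C(nC.-1, i)%:R * 'C(nD, l)%:R)
      * fC g0 (widen_ord (leqnSn nC) i, l) x * (Dn i l - Dn i.+1 l))); last first.
  rewrite /fC /binom_pmf /= e2. ring.
by rewrite lerN2; apply: ler_wpM2r => //; apply: ler_wpM2l => //.
Qed.

End Main.

Unset Implicit Arguments. Set Strict Implicit.

Theorem theorem2 (R : realType) (nC nD : nat) (g0 g0' : R -> R) (t1 : R)
  (K : nat) (theta : nat -> R) (d : Sidx nC nD -> bool)
  (MD MC : Sidx nC nD -> nat -> R) :
  (0 < nC)%N -> (0 < nD)%N ->
  0 <= t1 <= 1 ->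
  (forall x y : R, 0 <= x -> x < y -> y <= t1 -> g0 x < g0 y) ->
  (forall x : R, 0 <= x <= t1 -> is_derive x 1 g0 (g0' x)) ->
  0 <= g0 0 <= 1 -> g0 t1 = 1 ->
  theta 1%N = 0 -> theta K = t1 ->
  (forall j : nat, (1 <= j < K)%N -> theta j < theta j.+1) ->
  (forall s t : Sidx nC nD, ((nat_of_ord t.1).+1 = nat_of_ord s.1) -> (nat_of_ord t.2 = nat_of_ord s.2) ->
      d s -> d t) ->
  (forall s t : Sidx nC nD, (nat_of_ord t.1 = nat_of_ord s.1) -> (nat_of_ord t.2 = (nat_of_ord s.2).+1) ->
      d s -> d t) ->
  (forall (j : nat) (s : Sidx nC nD), (1 <= j < K)%N -> (0 < s.2)%N ->
      is_max_on (fD g0 g0' s) (theta j) (theta j.+1) (MD s j)) ->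
  (forall (j : nat) (s : Sidx nC nD), (1 <= j < K)%N -> (s.1 < nC)%N ->
      is_min_on (fC g0 s) (theta j) (theta j.+1) (MC s j)) ->
  forall (j : nat), (1 <= j < K)%N ->
  forall th : R, theta j < th < theta j.+1 ->
    rej_rate g0 d th <=
      dotd (p0 g0 theta j) d
      + Num.max 0 (dotd (fun t => vecmat (mD theta MD j) (@A_D R nC nD) t
                                  - vecmat (mC theta MC j) (@A_C R nC nD) t) d).
Proof.
move=> _ _ _ _ hder _ _ th1 thK thinc HB1 HB2 hMD hMC j hj th /andP[hth1 hth2].
have mono : forall p k, (1 <= p)%N -> (p + k <= K)%N -> theta p <= theta (p + k)%N.
  move=> p k hp; elim: k => [|k IH] hk; first by rewrite addn0.
  rewrite addnS in hk; apply: le_trans (IH (ltnW hk)) _.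
  rewrite addnS; apply: ltW; apply: thinc; apply/andP; split => //.
  exact: leq_trans hp (leq_addr _ _).
have h0 : 0 <= theta j.
  rewrite -th1; have := mono 1%N (j - 1)%N isT.
  have -> : (1 + (j - 1) = j)%N by move: hj => /andP[? ?]; lia.
  by apply; move: hj => /andP[? ?]; lia.
have h1 : theta j.+1 <= t1.
  rewrite -thK; have := mono j.+1 (K - j.+1)%N isT.
  have -> : (j.+1 + (K - j.+1) = K)%N by move: hj => /andP[? ?]; lia.
  by apply.
have hlt := thinc j hj.
set a := theta j in h0 hlt hth1 *; set b := theta j.+1 in h1 hlt hth2 *.
have hderI : forall x, a <= x <= b -> is_derive x 1 (rr g0 d) (rd g0 g0' d x).
  move=> x /andP[xa xb]; apply: der_rr; apply: hder.
  apply/andP; split; [exact: le_trans h0 xa | exact: le_trans xb h1].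
have [xi xiI E] : exists2 c, c \in `]a, th[ & rr g0 d th - rr g0 d a = rd g0 g0' d c * (th - a).
  apply: MVT => //.
    move=> x /[!in_itv] /= /andP[xa xb]; apply: hderI.
    by apply/andP; split; apply: ltW => //; exact: lt_trans xb hth2.
  apply: derivable_within_continuous => x /[!in_itv] /= /andP[xa xb].
  apply: (@ex_derive _ _ _ _ _ _ _ (hderI x _)).
  by rewrite xa (le_trans xb (ltW hth2)).
move: xiI => /[!in_itv] /= /andP[xia xib].
have hrd : rd g0 g0' d xi <= c1 d MD j - c2 d MC j.
  apply: rd_le => // s hs.
    case: (hMD j s hj hs) => _ H; apply: H.
    by apply/andP; split; apply: ltW => //; exact: lt_trans xib hth2.
  case: (hMC j s hj hs) => _ H; apply: H.
  by apply/andP; split; apply: ltW => //; exact: lt_trans xib hth2.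
have p0E : dotd (p0 g0 theta j) d = rr g0 d a.
  rewrite /dotd /p0 -rej_rr /rej_rate; apply: eq_bigr => s _; by rewrite mulrC.
rewrite rej_rr p0E ident -/a -/b.
set c := c1 d MD j - c2 d MC j in hrd *.
have e : rr g0 d th = rr g0 d a + rd g0 g0' d xi * (th - a) by rewrite -E; ring.
rewrite e lerD2l.
have k1 : rd g0 g0' d xi * (th - a) <= c * (th - a).
  by apply: ler_wpM2r => //; rewrite subr_ge0 ltW.
apply: le_trans k1 _.
rewrite le_max; apply/orP; case: (lerP 0 c) => hc; [right|left]; nra.
Qed.
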